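(* Let $\ell$ be a linear space of real sequences endowed with a norm, quasi-norm or $\alpha$-norm, such that $\ell\hookrightarrow\ell^\infty$, and let $I\colon\ell\to\ell^\infty$ be the embedding operator. Suppose $$\|I\|\le\sigma_\ell<2\|I\|,$$ where $\sigma_\ell:=\sup_{y\in B_\ell}\big(\sup_{n\in\mathbb{N}}y_n-\inf_{n\in\mathbb{N}}y_n\big)$ is the span of $\ell$. Then $I$ is not maximally non-compact; moreover $\alpha(I)\le\sigma_\ell/2$.
   Context: $B_\ell$ is the closed unit ball of $\ell$; $\ell^\infty$ is the space of bounded sequences with the sup norm. $\ell\hookrightarrow\ell^\infty$ means $\ell\subset\ell^\infty$ as a linear subspace with $\|a\|_\infty\le C\|a\|_\ell$ for some constant $C$; $\|I\|=\sup_{y\in B_\ell}\|y\|_\infty$. For a bounded map $T\colon X\to Y$, the ball measure of non-compactness is $\alpha(T)=\inf\{r>0:\ T(B_X)\subset\bigcup_{i=1}^m (y_i+rB_Y)\text{ for some } m\in\mathbb{N},\ y_i\in Y\}$; $T$ is maximally non-compact if $\alpha(T)=\|T\|$. *)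

(* Defs.v *)
From HB Require Import structures.
From mathcomp Require Import all_boot all_order all_algebra.
From mathcomp Require Import all_classical all_reals.
From mathcomp Require Import exp.
Set Implicit Arguments. Unset Strict Implicit. Unset Printing Implicit Defensive.
Import Order.TTheory GRing.Theory Num.Theory.
Local Open Scope classical_set_scope.
Local Open Scope ring_scope.

Section SeqSpaces.
Variable R : realType.
Notation seqR := (nat -> R).

Definition bounded_seq (y : seqR) : Prop := exists M : R, forall n, `|y n| <= M.

Definition supnorm (y : seqR) : R := sup [set `|y n| | n in [set: nat]].
Definition seq_sup (y : seqR) : R := sup [set y n | n in [set: nat]].
Definition seq_inf (y : seqR) : R := inf [set y n | n in [set: nat]].

Definition linear_subspace (L : set seqR) : Prop :=
  L (fun _ => 0) /\
  (forall x y, L x -> L y -> L (fun n => x n + y n)) /\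
  (forall (a : R) x, L x -> L (fun n => a * x n)).

Definition definite_on (L : set seqR) (q : seqR -> R) : Prop :=
  (forall x, L x -> 0 <= q x) /\ (forall x, L x -> q x = 0 -> x = (fun _ => 0)).

Definition is_norm (L : set seqR) (q : seqR -> R) : Prop :=
  definite_on L q /\
  (forall (a : R) x, L x -> q (fun n => a * x n) = `|a| * q x) /\
  (forall x y, L x -> L y -> q (fun n => x n + y n) <= q x + q y).

Definition is_quasinorm (L : set seqR) (q : seqR -> R) : Prop :=
  definite_on L q /\
  (forall (a : R) x, L x -> q (fun n => a * x n) = `|a| * q x) /\
  exists K : R, 1 <= K /\
    (forall x y, L x -> L y -> q (fun n => x n + y n) <= K * (q x + q y)).

Definition is_alpha_norm (L : set seqR) (q : seqR -> R) : Prop :=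
  definite_on L q /\
  exists al : R, 0 < al /\ al <= 1 /\
    (forall (a : R) x, L x -> q (fun n => a * x n) = (`|a| `^ al) * q x) /\
    (forall x y, L x -> L y -> q (fun n => x n + y n) <= q x + q y).

Definition embeds_linfty (L : set seqR) (q : seqR -> R) : Prop :=
  (forall y, L y -> bounded_seq y) /\
  exists C : R, forall y, L y -> supnorm y <= C * q y.

Definition unit_ball (L : set seqR) (q : seqR -> R) : set seqR :=
  [set y | L y /\ q y <= 1].

Definition emb_norm (L : set seqR) (q : seqR -> R) : R :=
  sup [set supnorm y | y in unit_ball L q].

Definition span_l (L : set seqR) (q : seqR -> R) : R :=
  sup [set seq_sup y - seq_inf y | y in unit_ball L q].

Definition alpha_I (L : set seqR) (q : seqR -> R) : R :=
  inf [set r : R | 0 < r /\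
    exists (m : nat) (c : 'I_m -> seqR),
      (forall i, bounded_seq (c i)) /\
      (forall y, unit_ball L q y ->
         exists i : 'I_m, supnorm (fun n => y n - c i n) <= r)].

Definition maximally_noncompact_I (L : set seqR) (q : seqR -> R) : Prop :=
  alpha_I L q = emb_norm L q.

End SeqSpaces.

(* Main.v *)
Require Import Defs.
From mathcomp Require Import all_boot all_order all_algebra.
From mathcomp Require Import all_classical all_reals.
From mathcomp Require Import ring lra.
Import Order.TTheory GRing.Theory Num.Theory.
Local Open Scope ring_scope.
Local Open Scope classical_set_scope.

Lemma seq_facts (R : realType) (y : nat -> R) (B : R) :
  (forall n, `|y n| <= B) ->
  [/\ forall n, `|y n| <= supnorm y, supnorm y <= B,
      forall n, y n <= seq_sup y, forall n, seq_inf y <= y n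
    & (seq_sup y <= supnorm y /\ - supnorm y <= seq_inf y)].
Proof.
move=> hB.
have hubA : has_ubound [set `|y n| | n in [set: nat]].
  by exists B => _ [n _ <-].
have h1 : forall n, `|y n| <= supnorm y.
  by move=> n; apply: ub_le_sup => //; exists n.
have h3 : forall n, y n <= seq_sup y.
  move=> n; apply: ub_le_sup; last by exists n.
  by exists B => _ [m _ <-]; apply: le_trans (hB m); apply: ler_norm.
have hlb : has_lbound [set y n | n in [set: nat]].
  by exists (- B) => _ [m _ <-]; have := hB m; rewrite ler_norml => /andP[].
have h4 : forall n, seq_inf y <= y n.
  by move=> n; apply: ge_inf => //; exists n.
split => //.
- by apply: ge_sup; [exists `|y 0%N|; exists 0%N | move=> _ [n _ <-]].
- split.
  + apply: ge_sup; first by exists (y 0%N); exists 0%N.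
    by move=> _ [n _ <-]; apply: le_trans (h1 n); apply: ler_norm.
  + apply: lb_le_inf; first by exists (y 0%N); exists 0%N.
    move=> _ [n _ <-]; have := h1 n; rewrite ler_norml => /andP[] //.
Qed.

Theorem mainTheorem3 (R : realType) (L : set (nat -> R)) (q : (nat -> R) -> R) :
  linear_subspace L ->
  is_norm L q \/ is_quasinorm L q \/ is_alpha_norm L q ->
  embeds_linfty L q ->
  emb_norm L q <= span_l L q ->
  span_l L q < 2 * emb_norm L q ->
  ~ maximally_noncompact_I L q /\ alpha_I L q <= span_l L q / 2.
Proof.
move=> _ hn [hbd [C hC]] _ hlt.
have qge0 : forall x, L x -> 0 <= q x.
  by case: hn => [[[]]|[[[]]|[[]]]].
have Cb : forall y, unit_ball L q y -> supnorm y <= `|C|.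
  move=> y [Ly qy1]; apply: le_trans (hC y Ly) _.
  have := qge0 y Ly; case: (lerP 0 C) => hc.
    by rewrite ger0_norm // => ?; nra.
  by rewrite ltr0_norm // => ?; nra.
set M := emb_norm L q; set s := span_l L q.
have hubM : has_ubound [set supnorm y | y in unit_ball L q].
  by exists `|C| => _ [y hy <-]; apply: Cb.
have yM : forall y, unit_ball L q y -> supnorm y <= M.
  by move=> y hy; apply: ub_le_sup => //; exists y.
have yfacts : forall y, unit_ball L q y ->
  [/\ forall n, `|y n| <= supnorm y, supnorm y <= supnorm y,
      forall n, y n <= seq_sup y, forall n, seq_inf y <= y n
    & (seq_sup y <= supnorm y /\ - supnorm y <= seq_inf y)].
  move=> y [Ly _]; have [B hB] := hbd y Ly; by have [h1 _ h3 h4 h5] := @seq_facts _ _ _ hB; split.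
have hubs : has_ubound [set seq_sup y - seq_inf y | y in unit_ball L q].
  exists (2 * `|C|) => _ [y hy <-].
  have [_ _ _ _ [h1 h2]] := yfacts y hy; have := Cb y hy; lra.
have ys : forall y, unit_ball L q y -> seq_sup y - seq_inf y <= s.
  by move=> y hy; apply: ub_le_sup => //; exists y.
have s0 : 0 <= s.
  have [[y0 hy0]|nob] := pselect (exists y, unit_ball L q y).
    apply: le_trans (ys y0 hy0).
    have [_ _ h3 h4 _] := yfacts y0 hy0; have := h3 0%N; have := h4 0%N; lra.
  rewrite /s /span_l.
  have -> : [set seq_sup y - seq_inf y | y in unit_ball L q] = set0.
    by apply/seteqP; split => // x [y hy _]; exfalso; apply: nob; exists y.
  by rewrite sup0.
have ha : alpha_I L q <= s / 2.
  apply/ler_addgt0Pr => e e0.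
  apply: ge_inf; first by exists 0 => r [/ltW].
  split; first lra.
  set N := Num.truncn (2 * M / e).
  exists N.+1, (fun i : 'I_N.+1 => fun _ : nat => - M + (i : nat)%:R * e).
  split; first by move=> i; exists `|- M + (i : nat)%:R * e|.
  move=> y hy.
  have [h1 _ h3 h4 [h5 h6]] := yfacts y hy.
  have hyM := yM y hy; have hys := ys y hy.
  set mid := (seq_sup y + seq_inf y) / 2.
  set t := (mid + M) / e.
  have ht : t * e = mid + M by rewrite /t; field; lra.
  have hm1 : - M <= mid by rewrite /mid; have := h3 0%N; have := h4 0%N; lra.
  have hm2 : mid <= M by rewrite /mid; have := h3 0%N; have := h4 0%N; lra.
  have t0 : 0 <= t by rewrite /t divr_ge0 //; [lra | exact: ltW].
  have tN : t <= 2 * M / e.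
    rewrite /t; apply: ler_wpM2r; [by rewrite invr_ge0 ltW | lra].
  have kN := le_truncn tN.
  have hk1 : (Num.truncn t)%:R <= t by rewrite truncn_le.
  have hk2 : t < (Num.truncn t).+1%:R by apply: truncnS_gt.
  have kltN : (Num.truncn t < N.+1)%N by rewrite ltnS.
  exists (Ordinal kltN) => /=.
  set k := Num.truncn t.
  rewrite -/k in hk1 hk2.
  have hk2' : t < k%:R + 1 by rewrite natr1.
  have a1 : k%:R * e <= mid + M by nra.
  have a2 : mid + M < k%:R * e + e by nra.
  apply: ge_sup; first by exists `|y 0%N - (- M + k%:R * e)|; exists 0%N.
  move=> _ [n _ <-]; rewrite ler_norml.
  have := h3 n; have := h4 n; rewrite /mid in a1 a2.
  move=> ? ?; apply/andP; split; lra.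
split => //.
rewrite /maximally_noncompact_I => heq.
move: ha; rewrite heq -/M => ha. move: hlt; rewrite -/M -/s => hlt. lra.
Qed.
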